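(* Let $\mathbb{B}$ be a separable Banach space with dual $\mathbb{B}^*$, $S_1^*(0)$ the unit sphere of $\mathbb{B}^*$, and $\mathcal K_{\mathbb B}$ the space of nonempty compact subsets of $\mathbb{B}$ with the Hausdorff distance. Let $(B_n)_{n\ge0}$ be a sequence of random convex elements of $\mathcal K_{\mathbb B}$ which is almost surely relatively compact in $\mathcal K_{\mathbb B}$. Suppose there is a deterministic function $\varphi:S_1^*(0)\to\mathbb{R}$ such that for every $\theta\in S_1^*(0)$, $\mathcal M_{B_n}(\theta)\to\varphi(\theta)$ almost surely as $n\to\infty$. Then $\varphi$ is the support function of some set $A\in\mathcal K_{\mathbb B}$ and $B_n\to A$ almost surely in $\mathcal K_{\mathbb B}$.
   Context: For $A\in\mathcal K_{\mathbb B}$, the support function is $\mathcal M_A(\theta)=\sup_{x\in A}\langle x,\theta\rangle$, $\theta\in S_1^*(0)$. Hausdorff distance: $\rho_{\mathbb B}(A,B)=\max\{\inf\{\epsilon:A\subset B^\epsilon\},\inf\{\epsilon:B\subset A^\epsilon\}\}$, $A^\epsilon$ the open $\epsilon$-neighbourhood. *)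

(* Defs.v *)
From HB Require Import structures.
From mathcomp Require Import all_boot all_order all_algebra.
From mathcomp Require Import all_classical all_reals all_analysis.
Set Implicit Arguments. Unset Strict Implicit. Unset Printing Implicit Defensive.
Import Order.TTheory GRing.Theory Num.Theory.
Import numFieldNormedType.Exports.
Local Open Scope classical_set_scope.
Local Open Scope ring_scope.

Section Defs.
Variables (R : realType) (V : normedModType R).

Definition convex_subset (A : set V) : Prop :=
  forall x y (t : R), A x -> A y -> 0 <= t -> t <= 1 ->
    A (t *: x + (1 - t) *: y).

Definition Kset (A : set V) : Prop := A !=set0 /\ compact A.

Definition dual_elt (f : V -> R) : Prop :=
  (forall (a : R) (x y : V), f (a *: x + y) = a * f x + f y) /\ continuous f.

Definition dual_norm (f : V -> R) : \bar R :=
  ereal_sup [set (`|f x|)%:E | x in [set x : V | `|x| <= 1]].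

Definition dual_sphere : set (V -> R) :=
  [set f | dual_elt f /\ dual_norm f = 1%E].

Definition support_fun (A : set V) (theta : V -> R) : R := sup (theta @` A).

Definition eps_nbhd (A : set V) (e : R) : set V :=
  [set x | exists2 a, A a & `|x - a| < e].

Definition hausdorff_dist (A B : set V) : R :=
  Num.max (inf [set e : R | A `<=` eps_nbhd B e])
          (inf [set e : R | B `<=` eps_nbhd A e]).

Definition Kconv (Bs : nat -> set V) (A : set V) : Prop :=
  (fun n => hausdorff_dist (Bs n) A) @ \oo --> (0 : R).

Definition Krel_compact (Bs : nat -> set V) : Prop :=
  forall u : nat -> nat, exists2 s : nat -> nat,
    (forall k, (s k < s k.+1)%N) &
    exists2 C, Kset C & Kconv (fun k => Bs (u (s k))) C.

Definition separable_space : Prop :=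
  exists D : set V, countable D /\ dense D.

End Defs.

(* Main.v *)
Require Import Defs.
From HB Require Import structures.
From mathcomp Require Import all_boot all_order all_algebra.
From mathcomp Require Import all_classical all_reals all_analysis.
From mathcomp Require Import ring lra.
Import Order.TTheory GRing.Theory Num.Theory.
Import numFieldNormedType.Exports.
Local Open Scope classical_set_scope.
Local Open Scope ring_scope.
Section Lin.
Variables (R : realType) (V : normedModType R).

Definition linf (f : V -> R) := forall (a : R) (x y : V), f (a *: x + y) = a * f x + f y.

Lemma linf0 f : linf f -> f 0 = 0.
Proof. move=> h; have := h 1 0 0; rewrite scale1r addr0 mul1r; lra. Qed.

Lemma linfZ f a x : linf f -> f (a *: x) = a * f x.
Proof. by move=> h; have := h a x 0; rewrite addr0 (linf0 _ h) addr0. Qed.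

Lemma linfD f x y : linf f -> f (x + y) = f x + f y.
Proof. by move=> h; have := h 1 x y; rewrite scale1r mul1r. Qed.

Lemma linfN f x : linf f -> f (- x) = - f x.
Proof. by move=> h; rewrite -scaleN1r (linfZ _ _ _ h) mulN1r. Qed.

Lemma linfB f x y : linf f -> f (x - y) = f x - f y.
Proof. by move=> h; rewrite (linfD _ _ _ h) (linfN _ _ h). Qed.

Lemma sphere_lin f : @dual_sphere R V f -> linf f.
Proof. by case=> -[]. Qed.

Lemma sphere_bound f y : @dual_sphere R V f -> `|f y| <= `|y|.
Proof.
move=> [[hl hc] hn].
have hf : linf f by [].
have [->|y0] := eqVneq y 0; first by rewrite (linf0 _ hf) normr0.
have ny : 0 < `|y| by rewrite normr_gt0.
have h1 : ((`|f (`|y|^-1 *: y)|)%:E <= 1)%E.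
  rewrite -hn; apply: ereal_sup_ubound; exists (`|y|^-1 *: y) => //=.
  by rewrite normrZ normfV normr_id mulVf // gt_eqF.
move: h1; rewrite lee_fin (linfZ _ _ _ hf) normrM normfV normr_id.
by rewrite ler_pdivrMl // mulr1.
Qed.

Lemma lip_cont f M : 0 < M -> linf f -> (forall y, `|f y| <= M * `|y|) -> continuous f.
Proof.
move=> M0 hf hb x; apply/cvgrPdist_lt => e e0.
apply/nbhs_ballP; exists (e / M); first by exact: divr_gt0.
move=> y; rewrite -ball_normE /= => hy.
rewrite -(linfB _ _ _ hf); apply: (le_lt_trans (hb _)).
by rewrite -ltr_pdivlMl // mulrC.
Qed.
End Lin.
Arguments linf {R V}.
Arguments linf0 {R V}. Arguments linfZ {R V}. Arguments linfD {R V}.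
Arguments linfN {R V}. Arguments linfB {R V}. Arguments sphere_lin {R V}.
Arguments sphere_bound {R V}. Arguments lip_cont {R V}.
Section HB.
Variables (R : realType) (V : normedModType R).
Variable p : V -> R.
Hypothesis pD : forall x y, p (x + y) <= p x + p y.
Hypothesis pZ : forall (t : R) x, 0 < t -> p (t *: x) = t * p x.
Hypothesis p0 : forall x, 0 <= p x.

Definition adm' (q : set V * (V -> R)) : Prop :=
  [/\ q.1 0, (forall (a : R) x y, q.1 x -> q.1 y -> q.1 (a *: x + y)),
      (forall (a : R) x y, q.1 x -> q.1 y -> q.2 (a *: x + y) = a * q.2 x + q.2 y)
    & (forall x, q.1 x -> q.2 x <= p x)].

Lemma adm'_g0 S g : adm' (S, g) -> g 0 = 0.
Proof. case=> /= h0 _ hl _; have := hl 1 0 0 h0 h0; rewrite scale1r addr0 mul1r; lra. Qed.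

Lemma adm'_gZ S g a x : adm' (S, g) -> S x -> g (a *: x) = a * g x.
Proof.
move=> h Sx; have := h; case=> /= h0 _ hl _.
by have := hl a x 0 Sx h0; rewrite addr0 (adm'_g0 _ _ h) addr0.
Qed.

Lemma ext_step S g z c : adm' (S, g) -> ~ S z ->
  (forall s, S s -> g s + c <= p (s + z)) ->
  (forall s, S s -> g s - c <= p (s - z)) ->
  exists g', adm' ([set v | exists s t, S s /\ v = s + t *: z], g') /\
    (forall s, S s -> g' s = g s) /\ g' z = c.
Proof.
move=> hadm Sz c1 c2; have := hadm; case=> /= S0 Scl gl gp.
have uniq s1 t1 s2 t2 : S s1 -> S s2 -> s1 + t1 *: z = s2 + t2 *: z -> s1 = s2 /\ t1 = t2.
  move=> S1 S2 e.
  have et : t1 = t2.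
    apply/eqP; apply/negPn/negP => ne; apply: Sz.
    have -> : z = (t1 - t2)^-1 *: s2 + (- (t1 - t2)^-1) *: s1.
      have e2 : (t1 - t2) *: z = s2 - s1.
        by rewrite scalerBl; apply/eqP; rewrite subr_eq addrAC -e addrC addKr.
      rewrite scaleNr -scalerBr -e2 scalerA mulVf ?scale1r //.
      by rewrite subr_eq0.
    by apply: (Scl) => //; have := Scl (- (t1 - t2)^-1) s1 0 S1 S0; rewrite addr0.
  by split=> //; move: e; rewrite et => /addIr.
pose S' := [set v | exists s t, S s /\ v = s + t *: z].
pose g' v := match pselect (S' v) with
  | left h => let st := projT1 (cid h) in
              let t := projT1 (cid (projT2 (cid h))) in g st + t * c
  | right _ => 0 end.
have g'E s t : S s -> g' (s + t *: z) = g s + t * c.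
  move=> Ss; rewrite /g'; case: pselect => [h|[]]; last by exists s, t.
  move: (projT2 (cid (projT2 (cid h)))) => [S1 e].
  have [e1 e2] := uniq _ _ _ _ Ss S1 e.
  by congr (g _ + _ * c); apply: esym.
exists g'; split; last split.
- split => /=.
  + by exists 0, 0; rewrite scale0r addr0.
  + move=> a _ _ [s1 [t1 [S1 ->]]] [s2 [t2 [S2 ->]]].
    exists (a *: s1 + s2), (a * t1 + t2); split; first exact: Scl.
    by rewrite scalerDr scalerDl scalerA addrACA.
  + move=> a _ _ [s1 [t1 [S1 ->]]] [s2 [t2 [S2 ->]]].
    have -> : a *: (s1 + t1 *: z) + (s2 + t2 *: z) = (a *: s1 + s2) + (a * t1 + t2) *: z.
      by rewrite scalerDr scalerDl scalerA addrACA.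
    rewrite !g'E // ?gl //; last exact: Scl.
    by rewrite mulrDr mulrA; lra.
  + move=> _ [s [t [Ss ->]]]; rewrite g'E //.
    have [t0|t0|->] := ltgtP t 0; last by rewrite mul0r scale0r !addr0; exact: gp.
    * have u0 : 0 < - t by rewrite oppr_gt0.
      have e1 : s + t *: z = (- t) *: ((- t)^-1 *: s - z).
        by rewrite scalerBr scalerA mulfV ?gt_eqF // scale1r scaleNr opprK.
      rewrite e1 pZ //.
      have := c2 _ (Scl (- t)^-1 _ _ Ss S0); rewrite addr0 (adm'_gZ _ _ _ _ hadm Ss) => h.
      have := ler_wpM2l (ltW u0) h; rewrite mulrBr mulrA mulfV ?gt_eqF // mul1r.
      lra.
    * have e1 : s + t *: z = t *: (t^-1 *: s + z).
        by rewrite scalerDr scalerA mulfV ?gt_eqF // scale1r.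
      rewrite e1 pZ //.
      have := c1 _ (Scl t^-1 _ _ Ss S0); rewrite addr0 (adm'_gZ _ _ _ _ hadm Ss) => h.
      have := ler_wpM2l (ltW t0) h; rewrite mulrDr mulrA mulfV ?gt_eqF // mul1r.
      lra.
- by move=> s Ss; have := g'E s 0 Ss; rewrite scale0r addr0 mul0r addr0.
- have := g'E 0 1 S0; rewrite scale1r add0r mul1r (adm'_g0 _ _ hadm) add0r; exact.
Qed.

Lemma ext_exists S g z : adm' (S, g) -> ~ S z ->
  exists g', adm' ([set v | exists s t, S s /\ v = s + t *: z], g') /\
    (forall s, S s -> g' s = g s).
Proof.
move=> hadm Sz; have := hadm; case=> /= S0 Scl gl gp.
pose E := [set g s - p (s - z) | s in S].
have Ene : E !=set0 by exists (g 0 - p (0 - z)), 0.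
have key s s' : S s -> S s' -> g s - p (s - z) <= p (s' + z) - g s'.
  move=> Ss Ss'; have := gp _ (Scl 1 _ _ Ss Ss'); rewrite scale1r.
  have -> : g (s + s') = g s + g s' by have := gl 1 s s' Ss Ss'; rewrite scale1r mul1r.
  have := pD (s - z) (s' + z); rewrite addrCA addrNK addrC; lra.
have Eub : has_ubound E by exists (p (0 + z) - g 0) => _ [s Ss <-]; exact: key.
have C1 : forall s, S s -> g s + sup E <= p (s + z).
  move=> s Ss; suff : sup E <= p (s + z) - g s by lra.
  by apply: ge_sup => // _ [s' Ss' <-]; exact: key.
have C2 : forall s, S s -> g s - sup E <= p (s - z).
  move=> s Ss; suff : g s - p (s - z) <= sup E by lra.
  by apply: ub_le_sup => //; exists s.
have [g' [h1 h2]] := @ext_step S g z (sup E) hadm Sz C1 C2.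
by exists g'; split => //; case: h2.
Qed.

Variable x0 : V.
Hypothesis px0 : 1 <= p x0.

Definition adm (q : set V * (V -> R)) : Prop := adm' q /\ q.1 x0 /\ q.2 x0 = 1.
Definition TT := {q : set V * (V -> R) | adm q}.
Definition leT (a b : TT) : Prop :=
  (sval a).1 `<=` (sval b).1 /\ (forall v, (sval a).1 v -> (sval a).2 v = (sval b).2 v).

Lemma hahn_banach : exists f, linf f /\ (forall x, f x <= p x) /\ f x0 = 1.
Proof.
have p00 : p 0 = 0.
  have := pZ 2 0 (ltr0Sn _ 1); rewrite scaler0; lra.
have nx0 : x0 != 0 by apply/eqP => e; move: px0; rewrite e p00; lra.
have adm0 : adm' ([set v | v = 0], fun _ => 0).
  split => /=.
  - by [].
  - by move=> a x y -> ->; rewrite scaler0 addr0.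
  - by move=> *; rewrite mulr0 addr0.
  - by move=> x _; exact: p0.
have nS : ~ [set v | v = 0] x0 by move=> /= e; move: nx0; rewrite e eqxx.
have qq1 : forall s, [set v | v = 0] s -> 0 + 1 <= p (s + x0).
  by move=> s /= ->; rewrite !add0r.
have qq2 : forall s, [set v | v = 0] s -> 0 - 1 <= p (s - x0).
  by move=> s /= ->; rewrite sub0r add0r; have := p0 (- x0); lra.
have [g0 [hg0 [_ gz]]] := @ext_step [set v | v = 0] (fun _ => 0) x0 1 adm0 nS qq1 qq2.
have t0adm : adm ([set v | exists s t, [set v | v = 0] s /\ v = s + t *: x0], g0).
  split; first exact: hg0.
  by split => //=; exists 0, 1; rewrite scale1r add0r.
pose t0 : TT := exist _ _ t0adm.
pose rl := fun a b : TT => `[< leT a b >].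
have Z1 : forall a, rl a a by move=> a; apply/asboolP; split.
have Z2 : forall a b c, rl a b -> rl b c -> rl a c.
  move=> a b c /asboolP [ab1 ab2] /asboolP [bc1 bc2]; apply/asboolP; split.
    exact: subset_trans bc1.
  by move=> v av; rewrite ab2 // bc2 //; exact: ab1.
have Z3 : forall A, total_on A rl -> exists t, forall s, A s -> rl s t.
  move=> A Atot.
  case: (pselect (A !=set0)) => [[a0 Aa0]|A0]; last first.
    by exists t0 => s As; exfalso; apply: A0; exists s.
  pose U := \bigcup_(q in A) (sval q).1.
  pose gU v := match pselect (exists q, A q /\ (sval q).1 v) with
    | left h => (sval (projT1 (cid h))).2 v | right _ => 0 end.
  have keyU q v : A q -> (sval q).1 v -> gU v = (sval q).2 v.
    move=> Aq qv; rewrite /gU; case: pselect => [h|[]]; last by exists q.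
    case: (cid h) => q' /= [Aq' q'v].
    have [/asboolP [_ h2]|/asboolP [_ h2]] := Atot _ _ Aq Aq'.
      by rewrite h2.
    by rewrite h2.
  have two q1 q2 x y : A q1 -> A q2 -> (sval q1).1 x -> (sval q2).1 y ->
      exists q, [/\ A q, (sval q).1 x & (sval q).1 y].
    move=> A1 A2 h1 h2; have [/asboolP [s1 _]|/asboolP [s2 _]] := Atot _ _ A1 A2.
      by exists q2; split => //; exact: s1.
    by exists q1; split => //; exact: s2.
  have Uadm : adm (U, gU).
    split; last first.
      split; first by exists a0 => //; case: (svalP a0) => _ [].
      by case: (svalP a0) => _ [hh1 hh2]; rewrite /= (keyU a0).
    split => /=.
    - by exists a0 => //; case: (svalP a0) => -[].
    - move=> a x y [q1 A1 h1] [q2 A2 h2]; have [q [Aq hx hy]] := two _ _ _ _ A1 A2 h1 h2.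
      by exists q => //; case: (svalP q) => -[_ hc _ _] _; exact: hc.
    - move=> a x y [q1 A1 h1] [q2 A2 h2]; have [q [Aq hx hy]] := two _ _ _ _ A1 A2 h1 h2.
      case: (svalP q) => -[_ hc hl _] _.
      by rewrite !(keyU q) //; [exact: hl | exact: hc].
    - move=> x [q Aq hq]; rewrite (keyU q) //.
      by case: (svalP q) => -[_ _ _ hp] _; exact: hp.
  exists (exist _ _ Uadm) => q Aq; apply/asboolP; split => /=.
    by move=> v hv; exists q.
  by move=> v hv; rewrite (keyU q).
have [t tmax] := @ZL_preorder TT t0 rl Z1 Z2 Z3.
have St : forall v, (sval t).1 v.
  move=> z; apply: contrapT => Sz.
  case: t tmax Sz => [[S g] [hadm [Sx0 gx0]]] tmax /= Sz.
  have [g' [h1 h2]] := ext_exists _ _ _ hadm Sz.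
  have a' : adm ([set v | exists s t, S s /\ v = s + t *: z], g').
    split => //; split; first by exists x0, 0; rewrite scale0r addr0.
    by rewrite /= h2.
  have := tmax (exist _ _ a'); rewrite /rl /=.
  have -> : `[< leT (exist adm (S, g) (conj hadm (conj Sx0 gx0))) (exist adm _ a') >].
    apply/asboolP; split => /=.
      by move=> v Sv; exists v, 0; rewrite scale0r addr0.
    by move=> v Sv; rewrite h2.
  move=> /(_ isT) /asboolP [/= sub _]; apply: Sz; apply: sub.
  by exists 0, 1; split; [case: (hadm)|rewrite scale1r add0r].
case: t tmax St => [[S g] [[_ _ gl gp] [_ gx0]]] _ /= St.
exists g; split; last split => //.
- by move=> a x y; apply: gl.
- by move=> x; apply: gp.
Qed.
End HB.
Section Sep.
Variables (R : realType) (V : normedModType R).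

Lemma comb_sub (l : R) (a b u v : V) :
  l *: a + (1 - l) *: b - (l *: u + (1 - l) *: v) = l *: (a - u) + (1 - l) *: (b - v).
Proof. by rewrite !scalerBr opprD addrACA. Qed.

Lemma comb_c (l : R) (u v c : V) :
  l *: u + (1 - l) *: v - c = l *: (u - c) + (1 - l) *: (v - c).
Proof. by rewrite -comb_sub; congr (_ - _); rewrite -scalerDl addrC subrK scale1r. Qed.

Lemma comb_lt (l a b d : R) : 0 <= l -> l <= 1 -> 0 <= a -> 0 <= b -> a < d -> b < d ->
  `|l| * a + `|1 - l| * b < d.
Proof.
move=> l0 l1 a0 b0 ad bd; rewrite (ger0_norm l0) (@ger0_norm _ (1 - l)); last by rewrite subr_ge0.
have h2 : 0 <= (1 - l) * (d - b) by apply: mulr_ge0; lra.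
have [->|lp] := eqVneq l 0; first by lra.
have h1 : 0 < l * (d - a) by apply: mulr_gt0; [rewrite lt_neqAle eq_sym lp l0|lra].
lra.
Qed.

Lemma nZ (T d : R) (y : V) : 0 < T -> (`|T^-1 *: y| < d) = (`|y| < d * T).
Proof. by move=> T0; rewrite normrZ normfV (gtr0_norm T0) mulrC ltr_pdivrMr. Qed.

Lemma separate (C : set V) x : C !=set0 -> closed C -> convex_subset C -> ~ C x ->
  exists th : V -> R, exists eta : R, @dual_sphere R V th /\ 0 < eta /\
    forall c, C c -> th c + eta <= th x.
Proof.
move=> [c0 Cc0] hcl hcv Cx.
have [d d0 hd] : exists2 d : R, 0 < d & forall c, C c -> d <= `|x - c|.
  apply: contrapT => hn; apply: Cx; apply: hcl => B /nbhs_ballP [r /= r0 hr].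
  apply: contrapT => hB; apply: hn; exists r => // c Cc; rewrite leNgt; apply/negP => hlt.
  by apply: hB; exists c; split => //; apply: hr; rewrite -ball_normE /=.
pose z0 := x - c0.
pose K := [set y : V | exists2 c, C c & `|y - (c - c0)| < d].
have Kball y : `|y| < d -> K y by move=> hy; exists c0; rewrite // subrr subr0.
have K0 : K 0 by apply: Kball; rewrite normr0.
have Kcv : forall (l : R) y1 y2, 0 <= l -> l <= 1 -> K y1 -> K y2 -> K (l *: y1 + (1 - l) *: y2).
  move=> l y1 y2 l0 l1 [c1 C1 h1] [c2 C2 h2].
  exists (l *: c1 + (1 - l) *: c2); first exact: hcv.
  have -> : l *: y1 + (1 - l) *: y2 - (l *: c1 + (1 - l) *: c2 - c0) =
      l *: (y1 - (c1 - c0)) + (1 - l) *: (y2 - (c2 - c0)).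
    by rewrite (comb_c l c1 c2 c0) comb_sub.
  apply: (le_lt_trans (ler_normD _ _)); rewrite !normrZ.
  by apply: comb_lt.
pose Sy (y : V) := [set t : R | 0 < t /\ K (t^-1 *: y)].
have Sne y : Sy y !=set0.
  have T0 : 0 < `|y| / d + 1 by have := divr_ge0 (normr_ge0 y) (ltW d0); lra.
  exists (`|y| / d + 1); split => //; apply: Kball; rewrite nZ //.
  rewrite mulrDr mulr1 mulrCA mulfV ?gt_eqF // mulr1; lra.
pose p y := inf (Sy y).
have Slb y : has_lbound (Sy y) by exists 0 => t [t0 _]; exact: ltW.
have p0 y : 0 <= p y by apply: lb_le_inf (Sne y) _ => t [t0 _]; exact: ltW.
have pub y t : Sy y t -> p y <= t by move=> h; exact: ge_inf (Slb y) _ h.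
have pbound y : p y <= `|y| / d.
  apply/ler_addgt0Pr => e e0; apply: pub.
  have T0 : 0 < `|y| / d + e by have := divr_ge0 (normr_ge0 y) (ltW d0); lra.
  split => //; apply: Kball; rewrite nZ //.
  rewrite mulrDr mulrCA mulfV ?gt_eqF // mulr1.
  have : 0 < d * e by exact: mulr_gt0.
  lra.
have pZle a y : 0 < a -> p (a *: y) <= a * p y.
  move=> a0; rewrite -ler_pdivrMl //; apply: lb_le_inf (Sne y) _ => t [t0 Kt].
  rewrite ler_pdivrMl //; apply: pub; split; first exact: mulr_gt0.
  by rewrite scalerA invfM mulrAC mulVf ?gt_eqF // mul1r.
have pZ t y : 0 < t -> p (t *: y) = t * p y.
  move=> t0; apply/le_anti; rewrite pZle //=.
  have := pZle t^-1 (t *: y); rewrite invr_gt0 => /(_ t0).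
  rewrite scalerA mulVf ?gt_eqF // scale1r => h.
  by rewrite -ler_pdivlMl.
have pD y z : p (y + z) <= p y + p z.
  have key s t : Sy y s -> Sy z t -> p (y + z) <= s + t.
    move=> [s0 Ks] [t0 Kt]; apply: pub.
    have st0 : 0 < s + t by lra.
    split => //.
    have e1 : 1 - s / (s + t) = t / (s + t) by field; rewrite gt_eqF.
    have -> : (s + t)^-1 *: (y + z) =
        (s / (s + t)) *: (s^-1 *: y) + (1 - s / (s + t)) *: (t^-1 *: z).
      rewrite e1 !scalerA scalerDr; congr (_ *: _ + _ *: _).
        by rewrite mulrAC mulfV ?gt_eqF // mul1r.
      by rewrite mulrAC mulfV ?gt_eqF // mul1r.
    apply: Kcv => //.
    - by apply: divr_ge0; apply: ltW.
    - by rewrite ler_pdivrMr // mul1r; lra.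
  have h1 t : Sy z t -> p (y + z) - t <= p y.
    move=> h; apply: lb_le_inf (Sne y) _ => s hs; have := key s t hs h; lra.
  have : p (y + z) - p y <= p z.
    by apply: lb_le_inf (Sne z) _ => t ht; have := h1 t ht; lra.
  lra.
have nz : z0 != 0.
  by apply/eqP => e; apply: Cx; move/eqP: e; rewrite subr_eq0 => /eqP ->.
have pz0 : 1 <= p z0.
  apply: lb_le_inf (Sne z0) _ => t [t0 Kt]; rewrite leNgt; apply/negP => t1.
  have : K z0.
    have -> : z0 = t *: (t^-1 *: z0) + (1 - t) *: 0.
      by rewrite scaler0 addr0 scalerA mulfV ?gt_eqF // scale1r.
    by apply: Kcv => //; lra.
  move=> [c Cc]; rewrite /z0 opprB addrA subrK; apply/negP; rewrite -leNgt.
  exact: hd.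
have [f [fl [fp fz]]] := @hahn_banach R V p pD pZ p0 z0 pz0.
have fb y : `|f y| <= d^-1 * `|y|.
  have h1 : f y <= `|y| / d := le_trans (fp y) (pbound y).
  have h2 : - f y <= `|y| / d.
    by rewrite -(linfN f y fl); have := le_trans (fp (- y)) (pbound (- y)); rewrite normrN.
  rewrite ler_norml mulrC; apply/andP; split; lra.
pose lam := d / (2 * (`|z0| + 1)).
have lam0 : 0 < lam.
  by apply: divr_gt0 => //; apply: mulr_gt0 => //; have := normr_ge0 z0; lra.
have hlam : `|lam *: z0| < d.
  rewrite normrZ (gtr0_norm lam0) /lam mulrAC ltr_pdivrMr; last first.
    by apply: mulr_gt0 => //; have := normr_ge0 z0; lra.
  have := normr_ge0 z0; nra.
have fc c : C c -> f c + lam <= f x.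
  move=> Cc.
  have Ky : K (c - c0 + lam *: z0) by exists c => //; rewrite addrAC subrr add0r.
  have : p (c - c0 + lam *: z0) <= 1.
    by apply: pub; split; [lra|rewrite invr1 scale1r].
  have := fp (c - c0 + lam *: z0).
  rewrite (linfD f _ _ fl) (linfB f _ _ fl) (linfZ f _ _ fl) fz.
  have : f z0 = f x - f c0 by rewrite /z0 (linfB f _ _ fl).
  rewrite fz; lra.
pose E := [set `|f v| | v in [set v : V | `|v| <= 1]].
have Ene : E !=set0 by exists `|f 0|, 0 => //=; rewrite normr0.
have Eub : has_ubound E.
  exists d^-1 => _ [v hv <-].
  have : d^-1 * `|v| <= d^-1 * 1 := ler_wpM2l (ltW (ltac:(by rewrite invr_gt0) : 0 < d^-1)) hv.
  have := fb v; rewrite mulr1; lra.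
pose s := sup E.
have s0 : 0 < s.
  have nz0 : 0 < `|z0| by rewrite normr_gt0.
  have Eu : E `|f (`|z0|^-1 *: z0)|.
    exists (`|z0|^-1 *: z0) => //=.
    by rewrite normrZ normfV normr_id mulVf // gt_eqF.
  apply: (lt_le_trans _ (ub_le_sup Eub Eu)).
  by rewrite (linfZ f _ _ fl) fz mulr1 normfV normr_id invr_gt0.
pose th v := f v / s.
have thl : linf th by move=> a y1 y2; rewrite /th fl mulrDl mulrA.
exists th, (lam / s); split; last split.
- split; first split.
  + exact: thl.
  + apply: (lip_cont th (d^-1 / s)) => //; first by apply: divr_gt0 => //; rewrite invr_gt0.
    move=> y; rewrite /th normrM normfV (gtr0_norm s0) mulrAC.
    by apply: ler_wpM2r; [rewrite invr_ge0 ltW|exact: fb].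
  + rewrite /dual_norm.
    pose E' := [set `|th v| | v in [set v : V | `|v| <= 1]].
    have -> : [set (`|th v|)%:E | v in [set v : V | `|v| <= 1]] = [set y%:E | y in E'].
      apply/seteqP; split => [_ [v hv <-]|_ [_ [v hv <-] <-]].
        by exists `|th v| => //; exists v.
      by exists v.
    have thE v : `|th v| = `|f v| / s by rewrite /th normrM normfV (gtr0_norm s0).
    have E'ub : has_ubound E'.
      exists 1 => _ [v hv <-]; rewrite thE ler_pdivrMr // mul1r.
      by apply: ub_le_sup => //; exists v.
    have E'ne : E' !=set0 by exists `|th 0|, 0 => //=; rewrite normr0.
    rewrite ereal_sup_EFin //; congr (_%:E); apply/le_anti/andP; split.
      by apply: ge_sup => // _ [v hv <-]; rewrite thE ler_pdivrMr // mul1r; apply: ub_le_sup => //; exists v.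
    rewrite leNgt; apply/negP => h.
    have : s <= s * sup E'.
      apply: ge_sup => // _ [v hv <-].
      have : `|th v| <= sup E' by apply: ub_le_sup => //; exists v.
      rewrite thE ler_pdivrMr //; lra.
    rewrite -[X in X <= _]mulr1 ler_pM2l //; lra.
- exact: divr_gt0.
- move=> c Cc; rewrite /th -mulrDl; apply: ler_wpM2r; first by rewrite invr_ge0 ltW.
  exact: fc.
Qed.
End Sep.
Section Haus.
Variables (R : realType) (V : normedModType R).
Notation sph := (@dual_sphere R V).

Lemma cbound (A : set V) : compact A -> exists M, forall a, A a -> `|a| <= M.
Proof.
move=> /compact_bounded [M [_ hM]]; exists (M + 1) => a Aa.
by apply: (hM (M + 1)) => //; lra.
Qed.

Lemma supp_hasub (A : set V) th : compact A -> sph th -> has_ubound (th @` A).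
Proof.
move=> /cbound [M hM] hs; exists M => _ [a Aa <-].
apply: le_trans (hM a Aa); apply: le_trans (sphere_bound th a hs).
exact: ler_norm.
Qed.

Lemma supp_ub (A : set V) th a : compact A -> sph th -> A a -> th a <= support_fun A th.
Proof. by move=> cA hs Aa; apply: ub_le_sup; [exact: supp_hasub|exists a]. Qed.

Lemma supp_le (A : set V) th b : A !=set0 -> (forall a, A a -> th a <= b) ->
  support_fun A th <= b.
Proof.
move=> [a0 Aa0] hb; apply: ge_sup; first by exists (th a0), a0.
by move=> _ [a Aa <-]; exact: hb.
Qed.

Lemma nbhd_supp (A B : set V) th e : A !=set0 -> compact B -> sph th ->
  A `<=` eps_nbhd B e -> support_fun A th <= support_fun B th + e.
Proof.
move=> An cB hs sub; apply: supp_le => // a Aa.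
have [b Bb hab] := sub a Aa.
have -> : a = b + (a - b) by rewrite addrC subrK.
rewrite (linfD th _ _ (sphere_lin th hs)).
have := supp_ub _ _ _ cB hs Bb; have := le_trans (ler_norm _) (sphere_bound th (a - b) hs).
lra.
Qed.

Lemma hd_sub1 (A B : set V) e : Kset A -> Kset B ->
  inf [set e : R | A `<=` eps_nbhd B e] < e -> A `<=` eps_nbhd B e.
Proof.
move=> [An cA] [[b0 Bb0] cB] hi.
have [M hM] := cbound _ cA.
have ne : [set e : R | A `<=` eps_nbhd B e] !=set0.
  exists (M + `|b0| + 1) => a Aa; exists b0 => //.
  apply: (le_lt_trans (ler_normB _ _)); have := hM a Aa; lra.
have [e' he' lt] := inf_lt ne hi.
move=> a Aa; have [b Bb hb] := he' a Aa; exists b => //; exact: lt_trans hb lt.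
Qed.

Lemma hd_sub (A B : set V) e : Kset A -> Kset B -> hausdorff_dist A B < e ->
  A `<=` eps_nbhd B e /\ B `<=` eps_nbhd A e.
Proof.
move=> KA KB; rewrite /hausdorff_dist gt_max => /andP [h1 h2].
by split; apply: hd_sub1.
Qed.

Lemma Kconv_ev (Bs : nat -> set V) C e : Kconv Bs C -> 0 < e ->
  \forall n \near \oo, hausdorff_dist (Bs n) C < e.
Proof.
move=> /cvgrPdist_lt h e0; apply: filterS (h e e0) => n.
by rewrite sub0r normrN; apply: le_lt_trans; exact: ler_norm.
Qed.

Lemma Kconv_supp (Bs : nat -> set V) C th : (forall n, Kset (Bs n)) -> Kset C ->
  sph th -> Kconv Bs C ->
  (fun n => support_fun (Bs n) th) @ \oo --> support_fun C th.
Proof.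
move=> KB KC hs hK; apply/cvgrPdist_lt => e e0.
have e2 : 0 < e / 2 by lra.
apply: filterS (Kconv_ev _ _ _ hK e2) => n hn.
have [s1 s2] := hd_sub _ _ _ (KB n) KC hn.
have := nbhd_supp _ _ _ _ (proj1 (KB n)) (proj2 KC) hs s1.
have := nbhd_supp _ _ _ _ (proj1 KC) (proj2 (KB n)) hs s2.
move=> h1 h2; rewrite ltr_norml; apply/andP; split; lra.
Qed.

Lemma Kconv_convex (Bs : nat -> set V) C : (forall n, Kset (Bs n) /\ convex_subset (Bs n)) ->
  Kset C -> Kconv Bs C -> convex_subset C.
Proof.
move=> KB KC hK x y t Cx Cy t0 t1.
have hcl : closed C := compact_closed (@norm_hausdorff _ V) (proj2 KC).
apply: hcl => B /nbhs_ballP [r /= r0 hr].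
have r2 : 0 < r / 2 by lra.
have [n hn] := filter_ex (Kconv_ev _ _ _ hK r2).
have [s1 s2] := hd_sub _ _ _ (proj1 (KB n)) KC hn.
have [a Ba ha] := s2 x Cx; have [b Bb hb] := s2 y Cy.
have Bw := proj2 (KB n) a b t Ba Bb t0 t1.
have [c Cc hc] := s1 _ Bw.
exists c; split => //; apply: hr; rewrite -ball_normE /=.
have -> : t *: x + (1 - t) *: y - c =
    (t *: x + (1 - t) *: y - (t *: a + (1 - t) *: b)) + (t *: a + (1 - t) *: b - c).
  by rewrite addrA subrK.
rewrite comb_sub; apply: (le_lt_trans (ler_normD _ _)).
have : `|t *: (x - a) + (1 - t) *: (y - b)| < r / 2.
  apply: (le_lt_trans (ler_normD _ _)); rewrite !normrZ.
  by apply: comb_lt => //.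
lra.
Qed.

Lemma subseq_cvg (v : nat -> R) (L : R) (u : nat -> nat) : (forall k, k <= u k)%N ->
  v @ \oo --> L -> (fun k => v (u k)) @ \oo --> L.
Proof.
move=> hu hv.
have hu' : u @ \oo --> \oo.
  by apply/cvgnyPge => A; exists A => // k /= hk; exact: leq_trans hk (hu k).
exact: (cvg_comp u v hu' hv).
Qed.

Lemma incr_ge (s : nat -> nat) : (forall k, s k < s k.+1)%N -> forall k, (k <= s k)%N.
Proof. by move=> hs; elim=> // k ih; exact: leq_ltn_trans ih (hs k). Qed.

End Haus.
Definition II := (seq (nat * rat) * nat)%type.

Section Fam.
Variables (R : realType) (V : normedModType R).
Notation sph := (@dual_sphere R V).
Variable e : nat -> V.
Hypothesis dense_e : forall (x : V) (r : R), 0 < r -> exists n, `|x - e n| < r.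

Lemma arith4 (a b c d r w E : R) : `|a - c| < E / 4 -> `|d - b| < E / 4 ->
  `|c - r| < w -> `|d - r| < w -> w < E / 8 -> `|a - b| < E.
Proof.
rewrite !ltr_norml => /andP [a1 b1] /andP [a2 b2] /andP [a3 b3] /andP [a4 b4] h.
apply/andP; split; lra.
Qed.

Definition cand (i : II) : set (V -> R) :=
  [set th | sph th /\ forall q, q \in i.1 -> `|th (e q.1) - ratr q.2| < (i.2.+1%:R)^-1].

Definition Thi (i : II) : V -> R :=
  match pselect (exists th, cand i th) with
  | left h => projT1 (cid h) | right _ => fun _ => 0 end.

Definition Th (n : nat) : V -> R :=
  match @choice.unpickle II n with Some i => Thi i | None => fun _ => 0 end.

Lemma approx th (K : set V) (eps : R) : sph th -> compact K -> 0 < eps ->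
  exists n, sph (Th n) /\ forall k, K k -> `|th k - Th n k| < eps.
Proof.
move=> hs cK e0.
have e4 : 0 < eps / 4 by lra.
have cov : K `<=` cover [set: nat] (fun j => ball (e j) (eps / 4)).
  move=> k _; have [j hj] := dense_e k (eps / 4) e4; exists j => //.
  by rewrite -ball_normE /= distrC.
have cK' : cover_compact K by rewrite -compact_cover.
have [D' _ hD'] := cK' nat [set: nat] _ (fun j _ => ball_open (e j) (eps / 4)) cov.
have [m hm] : exists m : nat, 0 + (m.+1%:R)^-1 < eps / 8 by apply: ltr_add_invr; lra.
rewrite add0r in hm.
have hq j : exists q : rat, `|th (e j) - ratr q| < (m.+1%:R)^-1.
  have w0 : 0 < (m.+1%:R : R)^-1 by rewrite invr_gt0.
  have ne : ball (th (e j)) (m.+1%:R)^-1 !=set0 by exists (th (e j)); exact: ballxx.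
  have [x [/= hb [q _ hqx]]] := dense_rat ne (ball_open (th (e j)) (m.+1%:R)^-1).
  by exists q; rewrite hqx; rewrite -ball_normE /= in hb.
pose q j := projT1 (cid (hq j)).
pose l := [seq (j, q j) | j <- finmap.enum_fset D'].
pose i : II := (l, m).
have ci : cand i th.
  split => // qq /mapP [j _ ->] /=; exact: (projT2 (cid (hq j))).
have ThE : Th (choice.pickle i) = Thi i by rewrite /Th choice.pickleK.
have [th' [ct' eth]] : exists th', cand i th' /\ Thi i = th'.
  rewrite /Thi; case: pselect => [h|[]]; last by exists th.
  by exists (projT1 (cid h)); split => //; exact: (projT2 (cid h)).
exists (choice.pickle i); rewrite ThE eth; split; first by case: ct'.
move=> k Kk; have [j /= Dj hj] := hD' k Kk.
have lj : (j, q j) \in l by apply: map_f.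
have h3 : `|th (e j) - ratr (q j)| < (m.+1%:R)^-1 := projT2 (cid (hq j)).
have h4 : `|th' (e j) - ratr (q j)| < (m.+1%:R)^-1 := (proj2 ct') _ lj.
move: hj; rewrite -ball_normE /= => hj.
have h1 : `|th k - th (e j)| < eps / 4.
  rewrite -(linfB th _ _ (sphere_lin th hs)); apply: le_lt_trans (sphere_bound th _ hs) _.
  by rewrite distrC.
have h2 : `|th' (e j) - th' k| < eps / 4.
  rewrite -(linfB th' _ _ (sphere_lin th' (proj1 ct'))).
  exact: le_lt_trans (sphere_bound th' _ (proj1 ct')) _.
exact: (arith4 _ _ _ _ _ _ _ h1 h2 h3 h4 hm).
Qed.
End Fam.
Section Uniq.
Variables (R : realType) (V : normedModType R).
Notation sph := (@dual_sphere R V).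
Variable e : nat -> V.
Hypothesis dense_e : forall (x : V) (r : R), 0 < r -> exists n, `|x - e n| < r.
Notation Th' := (@Th R V e).

Lemma arith5 (a b c x y eta : R) : 0 < eta -> `|a - b| < eta / 3 -> `|x - y| < eta / 3 ->
  a + eta <= x -> b < y - eta / 3.
Proof. rewrite !ltr_norml => e0 /andP [a1 b1] /andP [a2 b2] h; lra. Qed.

Lemma uniq_limit (C1 C2 : set V) : Kset C1 -> Kset C2 -> convex_subset C2 ->
  (forall n, sph (Th' n) -> support_fun C1 (Th' n) = support_fun C2 (Th' n)) ->
  C1 `<=` C2.
Proof.
move=> [n1 cC1] [n2 cC2] cv hsupp x C1x; apply: contrapT => C2x.
have hcl : closed C2 := compact_closed (@norm_hausdorff _ V) cC2.
have [th [eta [hs [eta0 hsep]]]] := @separate R V C2 x n2 hcl cv C2x.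
have e3 : 0 < eta / 3 by lra.
have [n [hs' hcl']] := @approx R V e dense_e th _ _ hs (compactU cC1 cC2) e3.
have h1 : support_fun C2 (Th' n) <= Th' n x - eta / 3.
  apply: supp_le => // c C2c; apply: ltW.
  apply: (arith5 (th c) (Th' n c) 0 (th x) (Th' n x) eta eta0 (hcl' c (or_intror C2c)) (hcl' x (or_introl C1x))).
  exact: hsep c C2c.
have h2 := supp_ub _ _ _ _ _ cC1 hs' C1x.
move: h1; rewrite -hsupp //; lra.
Qed.
End Uniq.

Lemma hd_ne (R : realType) (V : normedModType R) (A B : set V) : Kset A -> Kset B ->
  [set e : R | A `<=` eps_nbhd B e] !=set0.
Proof.
move=> [An cA] [[b0 Bb0] cB].
have [M hM] := cbound _ _ _ cA.
exists (M + `|b0| + 1) => a Aa; exists b0 => //.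
apply: (le_lt_trans (ler_normB _ _)); have := hM a Aa; lra.
Qed.

Lemma hd_ge0 (R : realType) (V : normedModType R) (A B : set V) : Kset A -> Kset B ->
  0 <= hausdorff_dist A B.
Proof.
move=> KA KB; rewrite /hausdorff_dist le_max; apply/orP; left.
apply: lb_le_inf; first exact: hd_ne.
move=> r hr; have [a Aa] := proj1 KA; have [b _ hb] := hr a Aa.
exact: ltW (le_lt_trans (normr_ge0 _) hb).
Qed.
Theorem lemma13 (R : realType) (V : completeNormedModType R)
  (d : measure_display) (Omega : measurableType d) (P : probability Omega R)
  (B : nat -> Omega -> set V) (phi : (V -> R) -> R) :
  @separable_space R V ->
  (forall n w, Kset (B n w) /\ convex_subset (B n w)) ->
  {ae P, forall w, Krel_compact (fun n => B n w)} ->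
  (forall theta, @dual_sphere R V theta ->
     {ae P, forall w, (fun n => support_fun (B n w) theta) @ \oo --> phi theta}) ->
  exists2 A : set V, Kset A /\
      (forall theta, @dual_sphere R V theta -> support_fun A theta = phi theta) &
    {ae P, forall w, Kconv (fun n => B n w) A}.
Proof.
move=> [D [cD dD]] hK hrel hconv.
have [e he] : exists e : nat -> V, forall (x : V) (r : R), 0 < r -> exists n, `|x - e n| < r.
  have hD x r : 0 < r -> exists2 y, D y & `|x - y| < r.
    move=> r0; have ne : ball x r !=set0 by exists x; exact: ballxx.
    have [y [hb Dy]] := dD _ ne (ball_open x r).
    by exists y => //; rewrite -ball_normE /= in hb.
  case/pfcard_geP: cD => [D0|/surjfunPex [f hf]].
    by have [y] := hD 0 1 ltr01; rewrite D0.
  exists f => x r r0; have [y Dy hy] := hD x r r0.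
  have : (f @` setT) y by rewrite -hf.
  by case=> n _ fy; exists n; rewrite fy.
pose Th' := @Th R V e.
pose sph := @dual_sphere R V.
pose G w := Krel_compact (fun n => B n w) /\
  forall n, sph (Th' n) -> (fun k => support_fun (B k w) (Th' n)) @ \oo --> phi (Th' n).
have aeG : {ae P, forall w, G w}.
  have h2 : {ae P, forall w, forall n, sph (Th' n) ->
      (fun k => support_fun (B k w) (Th' n)) @ \oo --> phi (Th' n)}.
    apply: ae_foralln => n; case: (pselect (sph (Th' n))) => [hs|hs].
      by apply: filterS (hconv _ hs) => w hw _.
    by apply: nearW => w /hs.
  by apply: filterS2 hrel h2 => w h1 h2; split.
have exae (Q : Omega -> Prop) : {ae P, forall w, Q w} -> exists w, Q w.
  move=> [N [mN PN0 sub]]; apply: contrapT => nQ.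
  have sN : [set: Omega] `<=` N by move=> w _; apply: sub => /= hq; apply: nQ; exists w.
  have := le_measure P (mem_set measurableT) (mem_set mN) sN.
  move=> h; have h1 : (P [set: Omega] <= P N)%E := h.
  by move: h1; rewrite probability_setT PN0 lee_fin ler10.
have KB (w : Omega) (n : nat) : Kset (B n w) := proj1 (hK n w).
have lim_supp (w : Omega) (u s : nat -> nat) (C : set V) : G w -> (forall k, k <= u (s k))%N -> Kset C ->
    Kconv (fun k => B (u (s k)) w) C ->
    forall n, sph (Th' n) -> support_fun C (Th' n) = phi (Th' n).
  move=> Gw hu KC hC n hs.
  have h1 := Kconv_supp _ _ _ _ _ (fun k => KB w (u (s k))) KC hs hC.
  have h2 := subseq_cvg _ _ _ _ hu ((proj2 Gw) n hs).
  exact: (cvg_unique (@Rhausdorff R) h1 h2).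
have Kconv_cv (w : Omega) (u s : nat -> nat) (C : set V) : Kset C -> Kconv (fun k => B (u (s k)) w) C -> convex_subset C.
  by move=> KC hC; exact: (Kconv_convex _ _ _ _ (fun k => hK (u (s k)) w) KC hC).
have [w0 Gw0] := exae _ aeG.
have [s0 hs0 [A KA hA]] := (proj1 Gw0) id.
have uA := lim_supp w0 id s0 A Gw0 (incr_ge _ hs0) KA hA.
have cA := Kconv_cv w0 id s0 A KA hA.
have same (w : Omega) (u s : nat -> nat) (C : set V) : G w -> (forall k, k <= u (s k))%N -> Kset C ->
    Kconv (fun k => B (u (s k)) w) C -> C = A.
  move=> Gw hu KC hC; have cC := Kconv_cv w u s C KC hC.
  have uC := lim_supp w u s C Gw hu KC hC.
  apply/seteqP; split.
    by apply: (@uniq_limit R V e he) => // n hs; rewrite uC // uA.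
  by apply: (@uniq_limit R V e he) => // n hs; rewrite uC // uA.
exists A.
  split => // th hs.
  have : {ae P, forall w, G w /\ ((fun n => support_fun (B n w) th) @ \oo --> phi th)}.
    by apply: filterS2 aeG (hconv th hs) => w a b; split.
  move=> /exae [w [Gw hw]].
  have [s hs' [C KC hC]] := (proj1 Gw) id.
  have CA := same w id s C Gw (incr_ge _ hs') KC hC; subst C.
  have h1 := Kconv_supp _ _ _ _ _ (fun k => KB w (id (s k))) KA hs hC.
  have h2 := subseq_cvg _ _ _ _ (incr_ge _ hs') hw.
  exact: (cvg_unique (@Rhausdorff R) h1 h2).
apply: filterS aeG => w Gw; apply: contrapT => nc.
have [eps [e0 heps]] : exists eps : R, 0 < eps /\
    forall N, exists n, (N <= n)%N /\ eps <= hausdorff_dist (B n w) A.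
  apply: contrapT => hn; apply: nc; apply/cvgrPdist_lt => eps e0.
  case: (pselect (exists N, forall n, (N <= n)%N -> hausdorff_dist (B n w) A < eps)).
    move=> [N hN]; exists N => // n /= hn'.
    by rewrite sub0r normrN ger0_norm ?hd_ge0 //; exact: hN.
  move=> hN; exfalso; apply: hn; exists eps; split => // N.
  apply: contrapT => hne; apply: hN; exists N => n hn'.
  by rewrite ltNge; apply/negP => hle; apply: hne; exists n; split.
pose u N := projT1 (cid (heps N)).
have hu N : (N <= u N)%N /\ eps <= hausdorff_dist (B (u N) w) A := projT2 (cid (heps N)).
have [s hs [C KC hC]] := (proj1 Gw) u.
have uk k : (k <= u (s k))%N := leq_trans (incr_ge _ hs k) (proj1 (hu (s k))).
have CA := same w u s C Gw uk KC hC; subst C.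
have [k hk] := filter_ex (Kconv_ev _ _ _ _ _ hC e0).
have := proj2 (hu (s k)); rewrite leNgt; move/negP; apply.
exact: hk.
Qed.
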